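(* Let $g\in V$ be represented by a pair of finite rooted binary trees $(T_-,T_+)$, each with $n\ge 1$ leaves, together with a bijection $\sigma$ of $\{1,\dots,n\}$. Form the closed labelled strand diagram $D_0(g)$ of $g$ as described in the context, and apply labelled Rule I repeatedly, in any order, until no edge goes from a merge vertex to a split vertex. Then the final labelled diagram has at most $n$ connected components, and the sum of all its edge labels is at most $2^{n-1}$.
   Context: The Cantor set $\mathfrak C=\{0,1\}^{\mathbb N}$. A finite rooted binary tree with $n$ leaves, ordered left to right, determines a partition of $\mathfrak C$ into $n$ cones $u_1\mathfrak C,\dots,u_n\mathfrak C$, where $u_i$ is the finite binary address of the $i$-th leaf (left child appends $0$, right child appends $1$). A triple $(T_-,T_+,\sigma)$ represents the element $g$ of Thompson's group $V$ given by $g(u_i w)=v_{\sigma(i)}w$, where $u_i$ (resp. $v_j$) are the leaf addresses of $T_-$ (resp. $T_+$). Closed labelled strand diagram $D_0(g)$: a finite directed graph with $2n-2$ trivalent vertices. The $n-1$ internal nodes of $T_-$ become split vertices (one incoming edge, two outgoing edges ordered left/right), with edges directed from the root toward the leaves; the $n-1$ internal nodes of $T_+$ become merge vertices (two incoming edges ordered left/right, one outgoing edge), with edges directed from the leaves toward the root. The $i$-th leaf of $T_-$ is joined to the $\sigma(i)$-th leaf of $T_+$ (the resulting bivalent points are erased, so each such path becomes a single edge), and finally the root of $T_+$ is joined by an edge to the root of $T_-$ (again erasing bivalent points). If $n=1$ the diagram is a single closed loop with no vertices. Every edge carries a nonnegative integer label: the edge (or loop) passing through the glued roots has label $1$, all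 other edges have label $0$. Labelled Rule I: suppose an edge $e$ with label $y$ goes from a merge vertex $m$ to a split vertex $s$, where $m$ has incoming edges $x_1$ (left) and $x_2$ (right) and $s$ has outgoing edges $z_1$ (left) and $z_2$ (right). Delete $m$, $s$ and $e$, and for $i=1,2$ join the strand $x_i$ directly to the strand $z_i$ (concatenating $x_i$, $e$, $z_i$). The label of each resulting edge is the sum of the labels of all old edge-pieces it is composed of, counted with multiplicity (e.g. if $x_1,x_2,z_1,z_2$ are distinct, the new edges have labels $x_1+y+z_1$ and $x_2+y+z_2$; if $x_2=z_1$, the result is a single edge with label $x_1+x_2+2y+z_2$). Strands that close up on themselves become closed loops (circle components without vertices), whose label is the sum of the labels along them. *)

(* Defs.v *)
From mathcomp Require Import all_boot.
From mathcomp Require Import fingroup perm.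
Set Implicit Arguments. Unset Strict Implicit. Unset Printing Implicit Defensive.

Inductive tree := Leaf | Node of tree & tree.

Fixpoint leaves (t : tree) : nat :=
  match t with Leaf => 1 | Node l r => leaves l + leaves r end.

Fixpoint size_int (t : tree) : nat :=
  match t with Leaf => 0 | Node l r => (size_int l + size_int r).+1 end.

(** Internal nodes of [t] get identifiers by preorder numbering starting at
    offset [o]: a node with id [o] has its left subtree numbered from [o.+1]
    and its right subtree from [o.+1 + size_int l]. *)
Fixpoint nodes (t : tree) (o : nat) : seq nat :=
  match t with
  | Leaf => [::]
  | Node l r => o :: nodes l o.+1 ++ nodes r (o.+1 + size_int l)
  end.

(** Internal tree edges: ((parent id, side), child id); side false = left. *)
Fixpoint iedges (t : tree) (o : nat) : seq ((nat * bool) * nat) :=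
  match t with
  | Leaf => [::]
  | Node l r =>
      let ol := o.+1 in let orr := o.+1 + size_int l in
      (if l is Node _ _ then [:: ((o, false), ol)] else [::]) ++
      (if r is Node _ _ then [:: ((o, true), orr)] else [::]) ++
      iedges l ol ++ iedges r orr
  end.

(** Leaves of [t], left to right, each given by the (parent id, side) port
    to which it is attached (for a non-trivial tree). *)
Fixpoint lports (t : tree) (o : nat) : seq (nat * bool) :=
  match t with
  | Leaf => [::]
  | Node l r =>
      let ol := o.+1 in let orr := o.+1 + size_int l in
      (if l is Node _ _ then lports l ol else [:: (o, false)]) ++
      (if r is Node _ _ then lports r orr else [:: (o, true)])
  end.

(** * Labelled strand diagrams
   A port is (vertex id, bool).  For a split vertex v: the incoming port is
   (v,false), the outgoing ports are (v,false) (left) and (v,true) (right).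
   For a merge vertex v: incoming ports (v,false) (left), (v,true) (right),
   outgoing port (v,false).
   Closed loops (vertex-free circle components) are recorded by their labels. *)
Definition edge := (((nat * bool) * (nat * bool)) * nat)%type.
Definition esrc (x : edge) : nat * bool := x.1.1.
Definition edst (x : edge) : nat * bool := x.1.2.
Definition elab (x : edge) : nat := x.2.
Definition mkedge (p q : nat * bool) (l : nat) : edge := ((p, q), l).

Record diagram := Diagram {
  splits : seq nat;
  merges : seq nat;
  edges  : seq edge;
  loops  : seq nat }.

Definition D0 (n : nat) (Tm Tp : tree) (sigma : 'S_n) : diagram :=
  match Tm, Tp with
  | Node _ _, Node _ _ =>
      let o := size_int Tm in
      let lm := lports Tm 0 in
      let lp := lports Tp o in
      Diagram (nodes Tm 0) (nodes Tp o)
        ([seq mkedge pc.1 (pc.2, false) 0 | pc <- iedges Tm 0] ++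
         [seq mkedge (pc.2, false) pc.1 0 | pc <- iedges Tp o] ++
         [seq mkedge (nth (0, false) lm i) (nth (0, false) lp (sigma i)) 0
            | i : 'I_n <- enum 'I_n] ++
         [:: mkedge (o, false) (0, false) 1])
        [::]
  | _, _ => Diagram [::] [::] [::] [:: 1]
  end.

(** * Labelled Rule I
   Implementation: the edge e (label y) from merge m to split s is removed,
   together with m and s; two fresh bivalent points j0, j1 (each carrying
   label y) are inserted, the strand x_i (into input i of m) now ends at j_i
   and the strand z_i (out of output i of s) now starts at j_i.  Then the
   bivalent points are erased one at a time ([contract]): the two pieces
   through j are concatenated (labels summed, plus y), and if the piece
   through j closes up on itself it becomes a closed loop. *)
Definition contract (j y : nat) (D : seq edge * seq nat) : seq edge * seq nat :=
  let: (es, ls) := D in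
  let rest := [seq x <- es | ((esrc x).1 != j) && ((edst x).1 != j)] in
  match [seq x <- es | (esrc x).1 == j], [seq x <- es | (edst x).1 == j] with
  | [:: b], [:: a] =>
      if a == b then (rest, (elab a + y) :: ls)
      else (mkedge (esrc a) (edst b) (elab a + y + elab b) :: rest, ls)
  | _, _ => (es, ls)
  end.

Definition redirect (m s j0 j1 : nat) (x : edge) : edge :=
  mkedge (if (esrc x).1 == s then (if (esrc x).2 then j1 else j0, false)
          else esrc x)
         (if (edst x).1 == m then (if (edst x).2 then j1 else j0, false)
          else edst x)
         (elab x).

Definition ids (D : diagram) : seq nat :=
  splits D ++ merges D ++
  flatten [seq [:: (esrc x).1; (edst x).1] | x <- edges D].

Definition fresh (D : diagram) : nat := (foldr maxn 0 (ids D)).+1.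

Definition applyI (D : diagram) (e : edge) : diagram :=
  let m := (esrc e).1 in let s := (edst e).1 in let y := elab e in
  let j0 := fresh D in let j1 := (fresh D).+1 in
  let es1 := map (redirect m s j0 j1) (rem e (edges D)) in
  let r := contract j1 y (contract j0 y (es1, loops D)) in
  Diagram [seq v <- splits D | v != s] [seq v <- merges D | v != m] r.1 r.2.

Definition merge_split_edge (D : diagram) (e : edge) : bool :=
  [&& e \in edges D, (esrc e).1 \in merges D & (edst e).1 \in splits D].

Definition ruleI (D D' : diagram) : Prop :=
  exists e, merge_split_edge D e /\ D' = applyI D e.

Inductive reduces : diagram -> diagram -> Prop :=
  | reduces_refl D : reduces D D
  | reduces_step D D' D'' : ruleI D D' -> reduces D' D'' -> reduces D D''.

Definition reduced (D : diagram) : Prop :=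
  forall e, ~~ merge_split_edge D e.

Definition vset (D : diagram) : seq nat := undup (splits D ++ merges D).

Definition adjD (D : diagram) : rel (seq_sub (vset D)) :=
  fun u v => has (fun x => (((esrc x).1 == val u) && ((edst x).1 == val v))
                        || (((esrc x).1 == val v) && ((edst x).1 == val u)))
                 (edges D).

Definition ncomponents (D : diagram) : nat :=
  n_comp (@adjD D) predT + size (loops D).

Definition total_label (D : diagram) : nat :=
  sumn (map elab (edges D)) + sumn (loops D).

(* Main.v *)
Require Import Defs.
From mathcomp Require Import all_boot.
From mathcomp Require Import fingroup perm.
From mathcomp Require Import zify.
Set Implicit Arguments. Unset Strict Implicit. Unset Printing Implicit Defensive.

Definition touches (u v : nat) (x : edge) : bool :=
  (((esrc x).1 == u) && ((edst x).1 == v)) || (((esrc x).1 == v) && ((edst x).1 == u)).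

Definition adj (es : seq edge) (u v : nat) : bool := has (touches u v) es.

Inductive conn (es : seq edge) : nat -> nat -> Prop :=
| cref u : conn es u u
| cstep u v w : adj es u v -> conn es v w -> conn es u w.

Lemma touchesC u v x : touches u v x = touches v u x.
Proof. by rewrite /touches orbC. Qed.

Lemma adjC es u v : adj es u v = adj es v u.
Proof. by apply: eq_has => x; rewrite touchesC. Qed.

Lemma conn_trans es u v w : conn es u v -> conn es v w -> conn es u w.
Proof. elim=> // a b c H _ IH /IH; exact: cstep. Qed.

Lemma conn1 es u v : adj es u v -> conn es u v.
Proof. move=> H; apply: cstep H (cref _ _). Qed.

Lemma conn_sym es u v : conn es u v -> conn es v u.
Proof.
elim=> [a|a b c H _ IH]; first exact: cref.
apply: conn_trans IH _; apply: conn1; by rewrite adjC.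
Qed.

Lemma adjP es u v : reflect (exists2 x, x \in es & touches u v x) (adj es u v).
Proof. exact: hasP. Qed.

Lemma adj_edge es x : x \in es -> adj es (esrc x).1 (edst x).1.
Proof. move=> H; apply/adjP; exists x => //; by rewrite /touches !eqxx. Qed.

Lemma touchesE u v x : touches u v x ->
  ((esrc x).1 = u /\ (edst x).1 = v) \/ ((esrc x).1 = v /\ (edst x).1 = u).
Proof. by rewrite /touches => /orP[/andP[/eqP-> /eqP->]|/andP[/eqP-> /eqP->]]; [left|right]. Qed.

Lemma count1_filter (T : Type) (p : pred T) s : count p s = 1 -> exists b, filter p s = [:: b].
Proof.
rewrite -size_filter; case: (filter p s) => [|b [|c t]] //= _; by exists b.
Qed.

Lemma count0P (T : eqType) (p : pred T) (s : seq T) : (forall x, x \in s -> ~~ p x) -> count p s = 0.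
Proof.
move=> H; apply/eqP; rewrite -leqn0 leqNgt -has_count; apply/hasP => -[x hx px].
by move: (H x hx); rewrite px.
Qed.

Lemma count_pos (T : eqType) (p : pred T) (s : seq T) x : x \in s -> p x -> 0 < count p s.
Proof. move=> hx px; rewrite -has_count; apply/hasP; by exists x. Qed.

Lemma count_rem1 (T : eqType) (p : pred T) (s : seq T) x : x \in s -> count p s = p x + count p (rem x s).
Proof. by move=> hx; rewrite (seq.permP (perm_to_rem hx)). Qed.

Lemma sum_rem1 (T : eqType) (f : T -> nat) (s : seq T) x : x \in s ->
  \sum_(y <- s) f y = f x + \sum_(y <- rem x s) f y.
Proof. by move=> hx; rewrite (perm_big _ (perm_to_rem hx)) big_cons. Qed.

Lemma count_sumE (T : Type) (p : pred T) (s : seq T) : count p s = \sum_(x <- s) (p x : nat).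
Proof. by rewrite -sumn_count sumnE big_map. Qed.


Lemma esrc_mk p q l : esrc (mkedge p q l) = p. Proof. by []. Qed.
Lemma edst_mk p q l : edst (mkedge p q l) = q. Proof. by []. Qed.
Lemma elab_mk p q l : elab (mkedge p q l) = l. Proof. by []. Qed.

Definition lsum (es : seq edge) := \sum_(x <- es) elab x.
Definition covr es (V : seq nat) (R : seq nat) := forall v, v \in V -> exists2 r, r \in R & conn es v r.

Section Contract.
Variables (j y : nat) (es : seq edge) (ls : seq nat) (a b : edge).
Hypothesis Hb : [seq x <- es | (esrc x).1 == j] = [:: b].
Hypothesis Ha : [seq x <- es | (edst x).1 == j] = [:: a].
Let rest := [seq x <- es | ((esrc x).1 != j) && ((edst x).1 != j)].

Lemma contractE : contract j y (es, ls) = if a == b then (rest, (elab a + y) :: ls)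
  else (mkedge (esrc a) (edst b) (elab a + y + elab b) :: rest, ls).
Proof. by rewrite /contract Hb Ha. Qed.

Lemma bin_es : b \in es /\ (esrc b).1 == j.
Proof. have: b \in [seq x <- es | (esrc x).1 == j] by rewrite Hb mem_seq1.
by rewrite mem_filter => /andP[]. Qed.
Lemma ain_es : a \in es /\ (edst a).1 == j.
Proof. have: a \in [seq x <- es | (edst x).1 == j] by rewrite Ha mem_seq1.
by rewrite mem_filter => /andP[]. Qed.

Lemma PaE : ((esrc a).1 == j) = (a == b).
Proof.
apply/idP/idP => [H|/eqP->]; last by case: bin_es.
have: a \in [seq x <- es | (esrc x).1 == j] by rewrite mem_filter H; case: ain_es.
by rewrite Hb mem_seq1.
Qed.
Lemma QbE : ((edst b).1 == j) = (a == b).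
Proof.
apply/idP/idP => [H|/eqP<-]; last by case: ain_es.
have: b \in [seq x <- es | (edst x).1 == j] by rewrite mem_filter H; case: bin_es.
by rewrite Ha mem_seq1 eq_sym.
Qed.

Lemma decomp (f : edge -> nat) :
  \sum_(x <- es) f x + (a == b) * f a = f a + f b + \sum_(x <- rest) f x.
Proof.
rewrite (bigID (fun x => (esrc x).1 == j)) /=.
rewrite -big_filter Hb big_seq1.
rewrite (bigID (fun x => (edst x).1 == j)) /=.
have -> : \sum_(i <- es | ~~ ((esrc i).1 == j) && ~~ ((edst i).1 == j)) f i = \sum_(x <- rest) f x.
  by rewrite big_filter.
have -> : \sum_(i <- es | ~~ ((esrc i).1 == j) && ((edst i).1 == j)) f i =
          \sum_(i <- [seq x <- es | (edst x).1 == j] | ~~ ((esrc i).1 == j)) f i.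
  by rewrite big_filter_cond; apply: eq_bigl => x; rewrite andbC.
rewrite Ha big_cons big_nil PaE.
by case: (a == b) => /=; lia.
Qed.

Let es' := (contract j y (es, ls)).1.
Let ls' := (contract j y (es, ls)).2.

Lemma contract_label : lsum es' + sumn ls' = lsum es + sumn ls + y.
Proof.
have D := decomp elab.
rewrite /es' /ls' contractE /lsum; case: eqP D => [->|_] D /=.
  move: D; rewrite mul1n; lia.
rewrite big_cons /elab /=; move: D; rewrite mul0n addn0 /elab; lia.
Qed.

Lemma contract_count_src (q : pred (nat * bool)) : (forall c, q (j, c) = false) ->
  count (fun x => q (esrc x)) es' = count (fun x => q (esrc x)) es.
Proof.
move=> Hq; have D := decomp (fun x => q (esrc x)).
have qb : q (esrc b) = false.
  have [_] := bin_es; case: (esrc b) => v c /= /eqP ->; exact: Hq.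
rewrite -!count_sumE in D.
rewrite /es' contractE; case: eqP D => [E|_] D.
  move: D; rewrite mul1n; have qa := qb; rewrite -E in qa; rewrite qa qb /=; lia.
rewrite /= esrc_mk; move: D; rewrite mul0n addn0 qb /=; lia.
Qed.

Lemma contract_count_dst (q : pred (nat * bool)) : (forall c, q (j, c) = false) ->
  count (fun x => q (edst x)) es' = count (fun x => q (edst x)) es.
Proof.
move=> Hq; have D := decomp (fun x => q (edst x)).
have qa : q (edst a) = false.
  have [_] := ain_es; case: (edst a) => v c /= /eqP ->; exact: Hq.
rewrite -!count_sumE in D.
rewrite /es' contractE; case: eqP D => [E|_] D.
  move: D; rewrite mul1n; have qb := qa; rewrite E in qb; rewrite qa qb /=; lia.
rewrite /= edst_mk; move: D; rewrite mul0n addn0 qa /=; lia.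
Qed.

Lemma contract_end (Vs : pred nat) :
  (forall x, x \in es -> Vs (esrc x).1 && Vs (edst x).1) ->
  forall x, x \in es' -> [&& Vs (esrc x).1, (esrc x).1 != j, Vs (edst x).1 & (edst x).1 != j].
Proof.
move=> H x; rewrite /es' contractE.
have Hr : x \in rest -> [&& Vs (esrc x).1, (esrc x).1 != j, Vs (edst x).1 & (edst x).1 != j].
  rewrite mem_filter => /andP[/andP[h1 h2] /H /andP[h3 h4]]; by rewrite h1 h2 h3 h4.
case: eqP => [_|/eqP nab]; first exact: Hr.
rewrite inE => /orP[/eqP->|]; last exact: Hr.
rewrite /= PaE QbE nab.
have [ha _] := ain_es; have [hb _] := bin_es.
by move: (H a ha) (H b hb) => /andP[-> _] /andP[_ ->].
Qed.

Lemma rest_sub x : x \in rest -> x \in es'.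
Proof. by rewrite /es' contractE; case: eqP => // _ h; rewrite inE h orbT. Qed.

Lemma touch_rest u v x : x \in es -> touches u v x -> u != j -> v != j -> x \in rest.
Proof.
move=> hx /touchesE [[e1 e2]|[e1 e2]] hu hv; by rewrite mem_filter e1 e2 hu hv hx.
Qed.

Definition fj (u : nat) := if u == j then (esrc a).1 else u.

Lemma contract_conn_nl : a != b -> forall u w, conn es u w -> conn es' (fj u) (fj w).
Proof.
move=> nab u w; elim=> [v|u1 v w1 H _ IH]; first exact: cref.
apply: conn_trans IH; case/adjP: H => x hx tx.
have [ha Qa] := ain_es; have [hb Pb] := bin_es.
have nPa : (esrc a).1 != j by rewrite PaE.
have nQb : (edst b).1 != j by rewrite QbE.
have hnew : adj es' (esrc a).1 (edst b).1.
  apply/adjP; exists (mkedge (esrc a) (edst b) (elab a + y + elab b)).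
    by rewrite /es' contractE (negbTE nab) inE eqxx.
  by rewrite /touches /= !eqxx.
case: (eqVneq u1 j) => [e1|n1]; case: (eqVneq v j) => [e2|n2].
- by rewrite /fj e1 e2 eqxx; apply: cref.
-
  rewrite /fj e1 eqxx (negbTE n2).
  move: tx; rewrite e1 => /touchesE [[s1 d1]|[s1 d1]].
  + have xb : x = b.
      have: x \in [seq x <- es | (esrc x).1 == j] by rewrite mem_filter s1 eqxx hx.
      by rewrite Hb mem_seq1 => /eqP.
    by apply: conn1; move: hnew; rewrite -xb d1.
  + have xa : x = a.
      have: x \in [seq x <- es | (edst x).1 == j] by rewrite mem_filter d1 eqxx hx.
      by rewrite Ha mem_seq1 => /eqP.
    by rewrite -xa s1; apply: cref.
- rewrite /fj e2 eqxx (negbTE n1).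
  move: tx; rewrite e2 => /touchesE [[s1 d1]|[s1 d1]].
  + have xa : x = a.
      have: x \in [seq x <- es | (edst x).1 == j] by rewrite mem_filter d1 eqxx hx.
      by rewrite Ha mem_seq1 => /eqP.
    by rewrite -xa s1; apply: cref.
  + have xb : x = b.
      have: x \in [seq x <- es | (esrc x).1 == j] by rewrite mem_filter s1 eqxx hx.
      by rewrite Hb mem_seq1 => /eqP.
    by apply: conn1; rewrite adjC; move: hnew; rewrite -xb d1.
- rewrite /fj (negbTE n1) (negbTE n2); apply: conn1; apply/adjP; exists x => //.
  apply: rest_sub; exact: touch_rest hx tx n1 n2.
Qed.

Lemma contract_conn_l : a == b -> forall u w, conn es u w -> u != j -> w != j /\ conn es' u w.
Proof.
move=> eab u w; elim=> [v|u1 v w1 H _ IH] hu; first by split=> //; apply: cref.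
case/adjP: H => x hx tx.
have nv : v != j.
  apply/eqP => ev; move: tx; rewrite ev => /touchesE [[s1 d1]|[s1 d1]].
  + have xa : x = a.
      have: x \in [seq x <- es | (edst x).1 == j] by rewrite mem_filter d1 eqxx hx.
      by rewrite Ha mem_seq1 => /eqP.
    by move: PaE; rewrite eab -xa s1 (negbTE hu).
  + have xb : x = b.
      have: x \in [seq x <- es | (esrc x).1 == j] by rewrite mem_filter s1 eqxx hx.
      by rewrite Hb mem_seq1 => /eqP.
    by move: QbE; rewrite eab -xb d1 (negbTE hu).
have [-> c] := IH nv; split=> //; apply: cstep c; apply/adjP; exists x => //.
apply: rest_sub; exact: touch_rest hx tx hu nv.
Qed.

Lemma contract_cover V R : covr es V R -> j \notin V -> j \in R ->
  exists R', [/\ covr es' V R', size R' + size ls' <= size R + size ls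
             & forall k, k \in R -> k != j -> k \in R'].
Proof.
move=> cv jV jR; case: (eqVneq a b) => [eab|nab].
- exists [seq r <- R | r != j]; split.
  + move=> v hv; have [r hr c] := cv v hv.
    have hvj : v != j by apply: contraNneq jV => <-.
    have [rj c'] := contract_conn_l (introT eqP eab) c hvj.
    by exists r => //; rewrite mem_filter rj.
  + rewrite /ls' contractE eab eqxx /= size_filter.
    have := count_pos (p:=pred1 j) jR (eqxx j).
    have := count_predC (pred1 j) R; rewrite /predC /=.
    have -> : count (fun x => ~~ (x == j)) R = count (fun r => r != j) R by [].
    lia.
  + by move=> k hk nk; rewrite mem_filter nk.
- exists (map fj R); split.
  + move=> v hv; have [r hr c] := cv v hv.
    have hvj : v != j by apply: contraNneq jV => <-.
    have := contract_conn_nl nab c; rewrite {1}/fj (negbTE hvj) => c'.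
    by exists (fj r) => //; apply: map_f.
  + by rewrite /ls' contractE (negbTE nab) size_map.
  + by move=> k hk nk; have := map_f fj hk; rewrite /fj (negbTE nk).
Qed.

End Contract.

Definition cS (es : seq edge) (p : nat * bool) := count (fun x => esrc x == p) es.
Definition cD (es : seq edge) (p : nat * bool) := count (fun x => edst x == p) es.

Record WF (D : diagram) : Prop := {
  wf_disj : forall v, v \in splits D -> v \notin merges D;
  wf_split : forall v, v \in splits D ->
     [/\ cD (edges D) (v,false) = 1, cD (edges D) (v,true) = 0,
         cS (edges D) (v,false) = 1 & cS (edges D) (v,true) = 1];
  wf_merge : forall v, v \in merges D ->
     [/\ cD (edges D) (v,false) = 1, cD (edges D) (v,true) = 1,
         cS (edges D) (v,false) = 1 & cS (edges D) (v,true) = 0];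
  wf_end : forall x, x \in edges D ->
     ((esrc x).1 \in splits D ++ merges D) && ((edst x).1 \in splits D ++ merges D) }.

Lemma foldr_max_ub (l : seq nat) x : x \in l -> x <= foldr maxn 0 l.
Proof.
elim: l => //= h t IH; rewrite inE => /orP[/eqP->|/IH h1]; first exact: leq_maxl.
exact: leq_trans h1 (leq_maxr _ _).
Qed.

Lemma fresh_ub D x : x \in ids D -> x < fresh D.
Proof. by move=> h; rewrite /fresh ltnS foldr_max_ub. Qed.

Lemma fresh_V D v : v \in splits D ++ merges D -> v < fresh D.
Proof. by move=> h; apply: fresh_ub; rewrite /ids catA mem_cat h. Qed.

Lemma fresh_E D x : x \in edges D -> (esrc x).1 < fresh D /\ (edst x).1 < fresh D.
Proof.
move=> h; split; apply: fresh_ub; rewrite /ids !mem_cat; apply/orP; right; apply/orP; right;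
  apply/flattenP; exists [:: (esrc x).1; (edst x).1]; rewrite ?inE ?eqxx ?orbT //;
  by apply: map_f.
Qed.

Lemma port2 (p : nat * bool) v : p.1 = v -> p = (v, false) \/ p = (v, true).
Proof. by case: p => a [] /= ->; [right|left]. Qed.

Lemma total_lsum D : total_label D = lsum (edges D) + sumn (loops D).
Proof. by rewrite /total_label sumnE big_map. Qed.

Section Step.
Variables (D : diagram) (e : edge).
Hypothesis wf : WF D.
Hypothesis hmse : merge_split_edge D e.
Let G := edges D.
Let m := (esrc e).1.
Let s := (edst e).1.
Let j0 := fresh D.
Let j1 := (fresh D).+1.
Let y := elab e.
Let es1 := map (redirect m s j0 j1) (rem e G).

Lemma he : e \in G. Proof. by case/and3P: hmse. Qed.
Lemma hm : m \in merges D. Proof. by case/and3P: hmse. Qed.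
Lemma hs : s \in splits D. Proof. by case/and3P: hmse. Qed.
Lemma nms : m != s.
Proof. by apply/eqP => E; have := wf_disj wf hs; rewrite -E hm. Qed.

Lemma esrc_e : esrc e = (m, false).
Proof.
have [_ _ _ h] := wf_merge wf hm.
case: (port2 (p:=esrc e) (erefl m)) => // E.
by have := count_pos (p := fun x => esrc x == (m,true)) he; rewrite E eqxx -/(cS G _) h => /(_ isT).
Qed.

Lemma edst_e : edst e = (s, false).
Proof.
have [_ h _ _] := wf_split wf hs.
case: (port2 (p:=edst e) (erefl s)) => // E.
by have := count_pos (p := fun x => edst x == (s,true)) he; rewrite E eqxx -/(cD G _) h => /(_ isT).
Qed.

Lemma cS_rem p : cS (rem e G) p = cS G p - (esrc e == p).
Proof. by rewrite /cS (count_rem1 (fun x => esrc x == p) he) addKn. Qed.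
Lemma cD_rem p : cD (rem e G) p = cD G p - (edst e == p).
Proof. by rewrite /cD (count_rem1 (fun x => edst x == p) he) addKn. Qed.

Lemma R1 x : x \in rem e G -> (esrc x).1 != m /\ (edst x).1 != s.
Proof.
move=> hx; have hxG : x \in G := mem_rem hx; split; apply/eqP => E.
- have [_ _ h1 h2] := wf_merge wf hm.
  case: (port2 E) => E2.
  + have := count_pos (p := fun x => esrc x == (m,false)) hx; rewrite E2 eqxx -/(cS _ _) cS_rem h1 esrc_e eqxx.
    by move=> /(_ isT).
  + have := count_pos (p := fun x => esrc x == (m,true)) hxG; rewrite E2 eqxx -/(cS _ _) h2.
    by move=> /(_ isT).
- have [h1 h2 _ _] := wf_split wf hs.
  case: (port2 E) => E2.
  + have := count_pos (p := fun x => edst x == (s,false)) hx; rewrite E2 eqxx -/(cD _ _) cD_rem h1 edst_e eqxx.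
    by move=> /(_ isT).
  + have := count_pos (p := fun x => edst x == (s,true)) hxG; rewrite E2 eqxx -/(cD _ _) h2.
    by move=> /(_ isT).
Qed.

Lemma esrc_red x : esrc (redirect m s j0 j1 x) =
  if (esrc x).1 == s then (if (esrc x).2 then j1 else j0, false) else esrc x.
Proof. by []. Qed.
Lemma edst_red x : edst (redirect m s j0 j1 x) =
  if (edst x).1 == m then (if (edst x).2 then j1 else j0, false) else edst x.
Proof. by []. Qed.
Lemma elab_red x : elab (redirect m s j0 j1 x) = elab x.
Proof. by []. Qed.

Lemma xlt x : x \in rem e G -> (esrc x).1 < j0 /\ (edst x).1 < j0.
Proof. by move=> h; apply: fresh_E; exact: mem_rem h. Qed.

Lemma j1j0 : (j1 == j0) = false. Proof. by apply/eqP; rewrite /j1 /j0; lia. Qed.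
Lemma j0j1 : (j0 == j1) = false. Proof. by apply/eqP; rewrite /j1 /j0; lia. Qed.

Lemma cnt_src_j (c : bool) :
  count (fun x => (esrc x).1 == (if c then j1 else j0)) es1 = 1.
Proof.
rewrite count_map.
have -> : count (preim (redirect m s j0 j1) (fun x => (esrc x).1 == (if c then j1 else j0))) (rem e G)
   = cS (rem e G) (s, c).
  apply: eq_in_count => x hx /=; rewrite esrc_red.
  have [l1 _] := xlt hx; move: l1.
  case: (esrc x) => v d /= l1.
  case: (eqVneq v s) => [->|nvs].
  - by rewrite xpair_eqE eqxx /=; case: d; case: c; rewrite /= ?eqxx ?j1j0 ?j0j1.
  - rewrite xpair_eqE (negbTE nvs) /=.
    by apply/eqP; case: c => E; move: l1; rewrite E /j1 /j0; lia.
have [_ _ h1 h2] := wf_split wf hs.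
rewrite cS_rem esrc_e xpair_eqE (negbTE nms) /=.
by case: c; rewrite ?subn0 ?h1 ?h2.
Qed.

Lemma cnt_dst_j (c : bool) :
  count (fun x => (edst x).1 == (if c then j1 else j0)) es1 = 1.
Proof.
rewrite count_map.
have -> : count (preim (redirect m s j0 j1) (fun x => (edst x).1 == (if c then j1 else j0))) (rem e G)
   = cD (rem e G) (m, c).
  apply: eq_in_count => x hx /=; rewrite edst_red.
  have [_ l1] := xlt hx; move: l1.
  case: (edst x) => v d /= l1.
  case: (eqVneq v m) => [->|nvs].
  - by rewrite xpair_eqE eqxx /=; case: d; case: c; rewrite /= ?eqxx ?j1j0 ?j0j1.
  - rewrite xpair_eqE (negbTE nvs) /=.
    by apply/eqP; case: c => E; move: l1; rewrite E /j1 /j0; lia.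
have [h1 h2 _ _] := wf_merge wf hm.
rewrite cD_rem edst_e xpair_eqE eq_sym (negbTE nms) /=.
by case: c; rewrite ?subn0 ?h1 ?h2.
Qed.

Let V' := [seq v <- splits D | v != s] ++ [seq v <- merges D | v != m].

Lemma inV' v : v \in splits D ++ merges D -> v != s -> v != m -> v \in V'.
Proof. by rewrite !mem_cat !mem_filter => /orP[]-> -> ->; rewrite ?orbT. Qed.

Lemma V'_prop v : v \in V' -> [/\ v \in splits D ++ merges D, v != s, v != m & v < j0].
Proof.
have nsm : s \notin merges D by apply: (wf_disj wf); apply: hs.
rewrite mem_cat !mem_filter => /orP[/andP[h1 h2]|/andP[h1 h2]].
- have hv : v \in splits D ++ merges D by rewrite mem_cat h2.
  split=> //; last exact: fresh_V.
  by apply/eqP => E; have := wf_disj wf h2; rewrite E hm.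
- have hv : v \in splits D ++ merges D by rewrite mem_cat h2 orbT.
  split=> //; last exact: fresh_V.
  by apply/eqP => E; move: nsm; rewrite -E h2.
Qed.

Definition Vs1 v := (v \in V') || (v == j0) || (v == j1).

Lemma end1 x : x \in es1 -> Vs1 (esrc x).1 && Vs1 (edst x).1.
Proof.
case/mapP => x0 hx0 ->; have [n1 n2] := R1 hx0.
have /andP[e1 e2] := wf_end wf (mem_rem hx0).
rewrite esrc_red edst_red /Vs1.
apply/andP; split.
- case: eqP => E; first by case: (esrc x0).2; rewrite eqxx ?orbT.
  by rewrite inV' //; apply/eqP.
- case: eqP => E; first by case: (edst x0).2; rewrite eqxx ?orbT.
  by rewrite inV' //; apply/eqP.
Qed.

Lemma cS_es1 k c : k != s -> k != j0 -> k != j1 -> cS es1 (k,c) = cS (rem e G) (k,c).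
Proof.
move=> ks k0 k1; rewrite /cS count_map; apply: eq_in_count => x hx /=.
rewrite esrc_red; case: ifP => // /eqP E.
rewrite !xpair_eqE; case: (esrc x) E => v d /= ->.
by rewrite xpair_eqE [s == k]eq_sym (negbTE ks); case: d => /=; rewrite ?[j1 == _]eq_sym ?[j0 == _]eq_sym ?(negbTE k1) ?(negbTE k0).
Qed.

Lemma cD_es1 k c : k != m -> k != j0 -> k != j1 -> cD es1 (k,c) = cD (rem e G) (k,c).
Proof.
move=> ks k0 k1; rewrite /cD count_map; apply: eq_in_count => x hx /=.
rewrite edst_red; case: ifP => // /eqP E.
rewrite !xpair_eqE; case: (edst x) E => v d /= ->.
by rewrite xpair_eqE [m == k]eq_sym (negbTE ks); case: d => /=; rewrite ?[j1 == _]eq_sym ?[j0 == _]eq_sym ?(negbTE k1) ?(negbTE k0).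
Qed.

Lemma lsum_es1 : lsum es1 + y = lsum G.
Proof. by rewrite /lsum (sum_rem1 _ he) big_map addnC. Qed.

Lemma red_conn v r : conn G v r -> v != m -> v != s ->
  (r != m /\ r != s /\ conn es1 v r) \/ conn es1 v j0 \/ conn es1 v j1.
Proof.
elim=> [u|u w r0 H _ IH] hu1 hu2; first by left; split=> //; split=> //; apply: cref.
case/adjP: H => x hx tx.
have xe : x != e.
  apply/eqP => E; move: tx; rewrite E => /touchesE [[E1 _]|[_ E1]].
  + by move: hu1; rewrite -E1 eqxx.
  + by move: hu2; rewrite -E1 eqxx.
have hxr : x \in rem e G by apply: rem_mem.
have [n1 n2] := R1 hxr.
have hxr1 : redirect m s j0 j1 x \in es1 by apply: map_f.
case: (eqVneq w m) => [Ew|nw1]; last case: (eqVneq w s) => [Ew|nw2].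
- move: tx; rewrite Ew => /touchesE [[s1 d1]|[s1 d1]]; last by rewrite s1 eqxx in n1.
  right; set j := if (edst x).2 then j1 else j0.
  have : conn es1 u j.
    apply: conn1; apply/adjP; exists (redirect m s j0 j1 x) => //.
    by rewrite /touches esrc_red edst_red s1 d1 (negbTE hu2) eqxx /= s1 !eqxx.
  by rewrite /j; case: (edst x).2 => c; [right|left].
- move: tx; rewrite Ew => /touchesE [[s1 d1]|[s1 d1]]; first by rewrite d1 eqxx in n2.
  right; set j := if (esrc x).2 then j1 else j0.
  have : conn es1 u j.
    apply: conn1; apply/adjP; exists (redirect m s j0 j1 x) => //.
    by rewrite /touches esrc_red edst_red s1 d1 (negbTE hu1) eqxx /= d1 !eqxx orbT.
  by rewrite /j; case: (esrc x).2 => c; [right|left].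
- have Hred : redirect m s j0 j1 x = x.
    move: tx => /touchesE [[s1 d1]|[s1 d1]];
    rewrite /redirect s1 d1 ?(negbTE hu1) ?(negbTE hu2) ?(negbTE nw1) ?(negbTE nw2);
    by case: x {hx xe hxr n1 n2 hxr1 s1 d1} => [[p q] l].
  have a1 : adj es1 u w by apply/adjP; exists x => //; rewrite -Hred.
  case: (IH nw1 nw2) => [[h1 [h2 h3]]|[h|h]].
  + by left; split=> //; split=> //; apply: cstep h3.
  + by right; left; apply: cstep h.
  + by right; right; apply: cstep h.
Qed.

Lemma lt_V' k : k \in V' -> [/\ k != s, k != m, k != j0 & k != j1].
Proof.
by case/V'_prop=> _ h1 h2 h3; split=> //; apply/eqP=> E; move: h3; rewrite E /j1 /j0; lia.
Qed.

Lemma y_le : y <= lsum G.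
Proof. by rewrite -lsum_es1 leq_addl. Qed.

Lemma step_main :
  [/\ WF (applyI D e), total_label (applyI D e) = total_label D + y,
      size (merges (applyI D e)) < size (merges D) &
      forall R, covr G (vset D) R -> exists R', covr (edges (applyI D e)) (vset (applyI D e)) R' /\
          size R' + size (loops (applyI D e)) <= size R + size (loops D) + 1].
Proof.
have c0 := cnt_src_j false; have d0 := cnt_dst_j false; rewrite /= in c0 d0.
have [b0 Hb0] := count1_filter c0.
have [a0 Ha0] := count1_filter d0.
have c1 := cnt_src_j true; have d1 := cnt_dst_j true; rewrite /= in c1 d1.
have lab2 := contract_label y (loops D) Hb0 Ha0.
have cs2 := contract_count_src y (loops D) Hb0 Ha0.
have cd2 := contract_count_dst y (loops D) Hb0 Ha0.
have en2 := contract_end (y:=y) (ls:=loops D) Hb0 Ha0 (Vs := Vs1) end1.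
have cov2 := contract_cover y (loops D) Hb0 Ha0.
have Eapp : applyI D e = Diagram [seq v <- splits D | v != s] [seq v <- merges D | v != m]
   (contract j1 y (contract j0 y (es1, loops D))).1 (contract j1 y (contract j0 y (es1, loops D))).2 by [].
rewrite Eapp.
case E2: (contract j0 y (es1, loops D)) lab2 cs2 cd2 en2 cov2 => [es2 ls2] lab2 cs2 cd2 en2 cov2.
have c1' : count (fun x => (esrc x).1 == j1) es2 = 1.
  by rewrite (cs2 (fun p => p.1 == j1)) // => c; rewrite /= j0j1.
have d1' : count (fun x => (edst x).1 == j1) es2 = 1.
  by rewrite (cd2 (fun p => p.1 == j1)) // => c; rewrite /= j0j1.
have [b1 Hb1] := count1_filter c1'.
have [a1 Ha1] := count1_filter d1'.
have lab3 := contract_label y ls2 Hb1 Ha1.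
have cs3 := contract_count_src y ls2 Hb1 Ha1.
have cd3 := contract_count_dst y ls2 Hb1 Ha1.
pose Vs2 := fun v => Vs1 v && (v != j0).
have H2' : forall x, x \in es2 -> Vs2 (esrc x).1 && Vs2 (edst x).1.
  move=> x hx; have /and4P[a b c d] := en2 x hx; by rewrite /Vs2 a b c d.
have en3 := contract_end (y:=y) (ls:=ls2) Hb1 Ha1 H2'.
have cov3 := contract_cover y ls2 Hb1 Ha1.
case E3: (contract j1 y (es2, ls2)) lab3 cs3 cd3 en3 cov3 => [es3 ls3] /= lab3 cs3 cd3 en3 cov3.
have hq k c : k \in V' -> forall j, j \in [:: j0; j1] -> forall c', ((j, c') == (k, c)) = false.
  move=> hk j hj c'; have [_ _ k0 k1] := lt_V' hk; rewrite xpair_eqE.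
  by move: hj; rewrite !inE => /orP[]/eqP->; rewrite eq_sym ?(negbTE k0) ?(negbTE k1).
have cDk k c : k \in V' -> cD es3 (k, c) = cD G (k, c).
  move=> hk; have [ks km k0 k1] := lt_V' hk.
  rewrite /cD (cd3 (fun p => p == (k,c))); last by move=> c' /=; rewrite xpair_eqE eq_sym (negbTE k1).
  rewrite (cd2 (fun p => p == (k,c))); last by move=> c' /=; rewrite xpair_eqE eq_sym (negbTE k0).
  rewrite -/(cD es1 (k,c)) cD_es1 // cD_rem edst_e xpair_eqE [s == k]eq_sym (negbTE ks) /=.
  by rewrite subn0.
have cSk k c : k \in V' -> cS es3 (k, c) = cS G (k, c).
  move=> hk; have [ks km k0 k1] := lt_V' hk.
  rewrite /cS (cs3 (fun p => p == (k,c))); last by move=> c' /=; rewrite xpair_eqE eq_sym (negbTE k1).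
  rewrite (cs2 (fun p => p == (k,c))); last by move=> c' /=; rewrite xpair_eqE eq_sym (negbTE k0).
  rewrite -/(cS es1 (k,c)) cS_es1 // cS_rem esrc_e xpair_eqE [m == k]eq_sym (negbTE km) /=.
  by rewrite subn0.
split.
- constructor => /=.
  + move=> v; rewrite !mem_filter => /andP[_ hv]; apply/negP => /andP[_ hv'].
    by have := wf_disj wf hv; rewrite hv'.
  + move=> v hv; have hV : v \in V' by rewrite mem_cat hv.
    rewrite !cDk // !cSk //; apply: (wf_split wf); by move: hv; rewrite mem_filter => /andP[_ ->].
  + move=> v hv; have hV : v \in V' by rewrite mem_cat hv orbT.
    rewrite !cDk // !cSk //; apply: (wf_merge wf); by move: hv; rewrite mem_filter => /andP[_ ->].
  + have vv v : Vs2 v -> v != j1 -> v \in V'.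
      by rewrite /Vs2 /Vs1 => /andP[/orP[/orP[-> //|/eqP->]|/eqP->]]; rewrite eqxx.
    by move=> x hx; have /and4P[h1 h2 h3 h4] := en3 x hx; rewrite (vv _ h1 h2) (vv _ h3 h4).
- by rewrite !total_lsum /= lab3 lab2 -lsum_es1; lia.
- rewrite /= size_filter.
  have h : 0 < count (predC (fun v => v != m)) (merges D) by apply: (count_pos hm); rewrite /= eqxx.
  rewrite -(count_predC (fun v => v != m) (merges D)); by rewrite -[X in X < _]addn0 ltn_add2l.
- move=> R cv.
  have hmv : m \in vset D by rewrite /vset mem_undup mem_cat hm orbT.
  have [r0 hr0 cm0] := cv m hmv.
  have hV v : v \in vset (Diagram [seq v <- splits D | v != s] [seq v <- merges D | v != m] es3 ls3) -> v \in V'.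
    by rewrite /vset mem_undup.
  have cov1 : covr es1 (vset (Diagram [seq v <- splits D | v != s] [seq v <- merges D | v != m] es3 ls3))
                (j0 :: j1 :: rem r0 R).
    move=> v /hV hv; have [hvD vs vm _] := V'_prop hv.
    have hv0 : v \in vset D by rewrite /vset mem_undup.
    have [r hr c] := cv v hv0.
    case: (eqVneq r r0) => [Er|nr].
    + have cvm : conn G v m by apply: conn_trans c _; rewrite Er; exact: conn_sym cm0.
      case: (red_conn cvm vm vs) => [[]|[h|h]]; first by rewrite eqxx.
      * by exists j0; rewrite ?inE ?eqxx.
      * by exists j1; rewrite ?inE ?eqxx ?orbT.
    + case: (red_conn c vm vs) => [[_ [_ h]]|[h|h]].
      * by exists r => //; rewrite !inE (rem_mem nr hr) !orbT.
      * by exists j0; rewrite ?inE ?eqxx.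
      * by exists j1; rewrite ?inE ?eqxx ?orbT.
  have nj0 : j0 \notin vset (Diagram [seq v <- splits D | v != s] [seq v <- merges D | v != m] es3 ls3).
    by apply/negP => /hV /lt_V' [_ _ /eqP].
  have nj1 : j1 \notin vset (Diagram [seq v <- splits D | v != s] [seq v <- merges D | v != m] es3 ls3).
    by apply/negP => /hV /lt_V' [_ _ _ /eqP].
  have [R2 [cv2 sz2 in2]] := cov2 _ _ cov1 nj0 (mem_head _ _).
  have j1R2 : j1 \in R2 by apply: in2; rewrite ?inE ?eqxx ?orbT // j1j0.
  have [R3 [cv3 sz3 _]] := cov3 _ _ cv2 nj1 j1R2.
  exists R3; split=> //=.
  have hpos : 0 < size R by move: (hr0); case: (R).
  move: sz2 sz3; rewrite /= size_rem //; case: (size R) hpos => // k _ /=; lia.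
Qed.

End Step.

Lemma nodes_iota t o : nodes t o = iota o (size_int t).
Proof.
elim: t o => [|l IHl r IHr] o //=.
by rewrite IHl IHr -iotaD.
Qed.

Lemma leavesE t : leaves t = (size_int t).+1.
Proof. elim: t => //= l IHl r IHr; rewrite IHl IHr; lia. Qed.

Lemma iedges_range t o pc : pc \in iedges t o ->
  o <= pc.1.1 < o + size_int t /\ o < pc.2 < o + size_int t.
Proof.
elim: t o pc => [|l IHl r IHr] o pc //=.
rewrite !mem_cat => /or4P[H|H|/IHl [h1 h2]|/IHr [h1 h2]].
- by move: H; case: l {IHl} => // l1 l2; rewrite inE => /eqP-> /=; lia.
- by move: H; case: r {IHr} => // r1 r2; rewrite inE => /eqP-> /=; lia.
- by move: h1 h2; case: pc => [[u b] w] /=; lia.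
- by move: h1 h2; case: pc => [[u b] w] /=; lia.
Qed.

Lemma lports_range0 t o v c : (v, c) \in lports t o -> o <= v < o + size_int t.
Proof.
elim: t o => [|l IHl r IHr] o //=.
rewrite mem_cat => /orP[H|H].
- move: H; case: l IHl => [|l1 l2] IHl; first by rewrite inE => /eqP [-> _] /=; lia.
  by move/IHl => /=; lia.
- move: H; case: r IHr => [|r1 r2] IHr; first by rewrite inE => /eqP [-> _] /=; lia.
  by move/IHr => /=; lia.
Qed.

Lemma lports_range t o p : p \in lports t o -> o <= p.1 < o + size_int t.
Proof. by case: p => v c /lports_range0. Qed.

Lemma iedges_child t o v :
  count (fun pc => pc.2 == v) (iedges t o) = ((o < v) && (v < o + size_int t)).
Proof.
elim: t o => [|l IHl r IHr] o /=; first by lia.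
rewrite !count_cat IHl IHr.
case: l IHl => [|l1 l2] IHl; case: r IHr => [|r1 r2] IHr /=; lia.
Qed.

Lemma iedges_parent t o p :
  count (fun pc => pc.1 == p) (iedges t o) + count (pred1 p) (lports t o) =
  ((o <= p.1) && (p.1 < o + size_int t)).
Proof.
case: p => v c.
elim: t o => [|l IHl r IHr] o /=; first by rewrite addn0; case: leqP => //; lia.
rewrite !count_cat.
have E : forall (l : tree) (b : bool) o1 o2, count (fun pc : nat * bool * nat => pc.1 == (v, c))
          (if l is Node _ _ then [:: ((o1, b), o2)] else [::]) +
          count (pred1 (v, c)) (if l is Node _ _ then lports l o2 else [:: (o1, b)]) =
          ((o1, b) == (v, c)) + (if l is Node _ _ then count (pred1 (v, c)) (lports l o2) else 0).
  by move=> [|? ?] b o1 o2 /=; rewrite ?addn0 // eq_sym.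
have := E l false o o.+1; have := E r true o (o.+1 + size_int l).
have := IHl o.+1; have := IHr (o.+1 + size_int l).
case: l {IHl E} => [|l1 l2]; case: r {IHr} => [|r1 r2] /=; rewrite !xpair_eqE;
  case: c => /=; lia.
Qed.

Lemma size_lports t o : (if t is Node _ _ then size (lports t o) else 1) = leaves t.
Proof.
elim: t o => [|l IHl r IHr] o //=.
rewrite size_cat; congr (_ + _); [case: l IHl => //= ? ? ->|case: r IHr => //= ? ? ->].
Qed.

Section Conv.
Variable D : diagram.
Hypothesis wf : WF D.

Lemma adjD_sym : symmetric (@adjD D).
Proof. by move=> u v; rewrite /adjD; apply: eq_has => x; rewrite orbC. Qed.

Lemma end_vset x : x \in edges D -> ((esrc x).1 \in vset D) && ((edst x).1 \in vset D).
Proof. by move=> h; rewrite /vset !mem_undup; apply: wf_end wf _ h. Qed.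

Lemma conn_connect u w : conn (edges D) u w -> forall x : seq_sub (vset D), ssval x = u ->
  exists y : seq_sub (vset D), ssval y = w /\ connect (@adjD D) x y.
Proof.
elim=> [v|u1 v w1 H _ IH] x hx; first by exists x; split=> //; apply: connect0.
case/adjP: H => z hz tz.
have hv : v \in vset D.
  have /andP[h1 h2] := end_vset hz.
  by case/touchesE: tz => [[_ <-]|[<- _]].
have [y [hy cy]] := IH (SeqSub hv) erefl.
exists y; split=> //; apply: connect_trans cy; apply: connect1.
by rewrite /adjD /=; apply/hasP; exists z => //; rewrite -/(touches _ _ _) hx.
Qed.

Lemma ncomp_le R : covr (edges D) (vset D) R -> n_comp (@adjD D) predT <= size R.
Proof.
move=> cv.
have csym := sym_connect_sym adjD_sym.
set ys := pmap insub R : seq (seq_sub (vset D)).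
apply: leq_trans (_ : #|[seq root (@adjD D) y | y <- ys]| <= _); last first.
  apply: leq_trans (card_size _) _; rewrite size_map /ys size_pmap_sub; exact: count_size.
apply: subset_leq_card; apply/subsetP => x; rewrite !inE andbT => /eqP rx.
have [r hr c] := cv (ssval x) (ssvalP x).
have [y [hy cy]] := conn_connect c erefl.
apply/mapP; exists y; first by rewrite /ys mem_pmap_sub /= hy.
by rewrite -rx; apply/rootP.
Qed.
End Conv.

Lemma tree_conn es t o : (forall pc, pc \in iedges t o -> adj es pc.1.1 pc.2) ->
  forall v, v \in nodes t o -> conn es v o.
Proof.
elim: t o => [|l IHl r IHr] o H v //.
have subl : forall pc, pc \in iedges l o.+1 -> pc \in iedges (Node l r) o.
  by move=> pc h; rewrite /= !mem_cat h !orbT.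
have subr : forall pc, pc \in iedges r (o.+1 + size_int l) -> pc \in iedges (Node l r) o.
  by move=> pc h; rewrite /= !mem_cat h !orbT.
rewrite /= inE mem_cat => /orP[/eqP->|/orP[hv|hv]]; first exact: cref.
- apply: conn_trans (IHl _ (fun pc h => H pc (subl pc h)) _ hv) _.
  apply: conn1; rewrite adjC; have := H ((o, false), o.+1); apply.
  by move: hv; clear - l r o; case: l => //= ? ? _; rewrite inE eqxx.
- apply: conn_trans (IHr _ (fun pc h => H pc (subr pc h)) _ hv) _.
  apply: conn1; rewrite adjC; have := H ((o, true), o.+1 + size_int l); apply.
  move: hv; clear - l r o; case: r => // ? ? _.
  by case: l => [|? ?]; rewrite /= !(inE, mem_cat) eqxx ?orbT.
Qed.

Section D0s.
Variables (n : nat) (Tm Tp : tree) (sigma : 'S_n).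
Let o := size_int Tm.
Let Np := size_int Tp.
Let lm := lports Tm 0.
Let lp := lports Tp o.
Hypothesis hm : 0 < o.
Hypothesis hp : 0 < Np.
Hypothesis slm : size lm = n.
Hypothesis slp : size lp = n.

Let E1 := [seq mkedge pc.1 (pc.2, false) 0 | pc <- iedges Tm 0].
Let E2 := [seq mkedge (pc.2, false) pc.1 0 | pc <- iedges Tp o].
Let E3 := [seq mkedge (nth (0, false) lm i) (nth (0, false) lp (sigma i)) 0 | i : 'I_n <- enum 'I_n].
Let E4 := [:: mkedge (o, false) (0, false) 1].
Let E := E1 ++ E2 ++ E3 ++ E4.

Lemma map_nth_enum (l : seq (nat * bool)) : size l = n -> [seq nth (0, false) l i | i : 'I_n <- enum 'I_n] = l.
Proof.
move=> sl.
have -> : [seq nth (0, false) l i | i : 'I_n <- enum 'I_n] =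
          [seq nth (0, false) l i | i <- [seq val i | i : 'I_n <- enum 'I_n]] by rewrite -map_comp.
by rewrite val_enum_ord -sl; exact: mkseq_nth.
Qed.

Lemma perm_sigma : perm_eq [seq sigma i | i <- enum 'I_n] (enum 'I_n).
Proof.
apply: uniq_perm; first by rewrite map_inj_uniq ?enum_uniq //; exact: perm_inj.
  exact: enum_uniq.
move=> i; rewrite mem_enum; apply/mapP; exists ((sigma^-1)%g i); first by rewrite mem_enum.
by rewrite permKV.
Qed.

Lemma E3_src p : count (fun x => esrc x == p) E3 = count (pred1 p) lm.
Proof.
by rewrite -(map_nth_enum slm) !count_map.
Qed.

Lemma E3_dst p : count (fun x => edst x == p) E3 = count (pred1 p) lp.
Proof.
rewrite count_map.
transitivity (count (pred1 p) [seq nth (0, false) lp (sigma i) | i : 'I_n <- enum 'I_n]).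
  by rewrite [RHS]count_map.
rewrite -[in RHS](map_nth_enum slp).
rewrite (map_comp (fun i : 'I_n => nth (0, false) lp i) sigma).
by apply/seq.permP; apply: perm_map; exact: perm_sigma.
Qed.

Lemma E3_end x : x \in E3 -> (esrc x) \in lm /\ (edst x) \in lp.
Proof.
case/mapP => i _ ->; split; rewrite ?esrc_mk ?edst_mk; apply: mem_nth; rewrite ?slm ?slp //.
Qed.
Lemma cnt_pair (T : Type) (s : seq T) (g : T -> nat) v c :
  count (fun x => (g x, false) == (v, c)) s = (~~c) * count (fun x => g x == v) s.
Proof.
case: c => /=; last by rewrite mul1n; apply: eq_count => x; rewrite xpair_eqE andbT.
by rewrite mul0n; elim: s => //= x s ->; rewrite xpair_eqE andbF.
Qed.

Lemma cD_E v c : cD E (v, c) =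
  (~~c) * ((0 < v) && (v < o)) + ((o <= v) && (v < o + Np)) + ((v == 0) && ~~c).
Proof.
rewrite /cD /E !count_cat E3_dst.
rewrite count_map (cnt_pair _ (fun pc : nat * bool * nat => pc.2)).
rewrite count_map.
have -> : count (preim (fun pc : nat * bool * nat => mkedge (pc.2, false) pc.1 0) (fun x => edst x == (v, c))) (iedges Tp o)
   = count (fun pc => pc.1 == (v, c)) (iedges Tp o) by [].
rewrite addnA addnA -[_ + _ + count_mem _ _]addnA (iedges_parent Tp o (v, c)) -/o -/Np.
have := iedges_child Tm 0 v; rewrite -/o add0n => ->.
by rewrite /= xpair_eqE [0 == v]eq_sym; case: c => /=; lia.
Qed.

Lemma cS_E v c : cS E (v, c) =
  ((v < o)) + (~~c) * ((o < v) && (v < o + Np)) + ((v == o) && ~~c).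
Proof.
rewrite /cS /E !count_cat E3_src.
rewrite [count _ (map _ (iedges Tp o))]count_map (cnt_pair _ (fun pc : nat * bool * nat => pc.2)).
rewrite count_map.
have -> : count (preim (fun pc : nat * bool * nat => mkedge pc.1 (pc.2, false) 0) (fun x => esrc x == (v, c))) (iedges Tm 0)
   = count (fun pc => pc.1 == (v, c)) (iedges Tm 0) by [].
rewrite [X in _ + X]addnCA addnA (iedges_parent Tm 0 (v, c)) -/o.
rewrite (iedges_child Tp o v) -/Np.
by rewrite /= xpair_eqE [o == v]eq_sym; case: c => /=; lia.
Qed.
Let Dg := Diagram (nodes Tm 0) (nodes Tp o) E [::].

Lemma inNodes v : (v \in nodes Tm 0 ++ nodes Tp o) = (v < o + Np).
Proof. by rewrite mem_cat !nodes_iota !mem_iota -/o -/Np; lia. Qed.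

Lemma WF_Dg : WF Dg.
Proof.
constructor => /=.
- by move=> v; rewrite !nodes_iota !mem_iota -/o -/Np; lia.
- move=> v; rewrite nodes_iota mem_iota -/o add0n => hv.
  by rewrite !cD_E !cS_E /=; split; lia.
- move=> v; rewrite nodes_iota mem_iota -/Np => hv.
  by rewrite !cD_E !cS_E /=; split; lia.
- move=> x; rewrite !inNodes /E !mem_cat => /or4P[|||].
  + case/mapP => pc hpc ->; rewrite esrc_mk edst_mk /=.
    by have := iedges_range hpc; rewrite -/o; case: (pc) => [[? ?] ?] /=; lia.
  + case/mapP => pc hpc ->; rewrite esrc_mk edst_mk /=.
    by have := iedges_range hpc; rewrite -/Np; case: (pc) => [[? ?] ?] /=; lia.
  + move=> /E3_end [h1 h2].
    have := lports_range h1; have := lports_range h2; rewrite -/o -/Np; case: (esrc x) => ? ?; case: (edst x) => ? ? /=; lia.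
  + by rewrite inE => /eqP->; rewrite esrc_mk edst_mk /=; lia.
Qed.

Lemma total_Dg : total_label Dg = 1.
Proof.
rewrite /total_label /= /E !map_cat !sumn_cat addn0.
have z : forall (T : Type) (s : seq T) (f : T -> edge), (forall x, elab (f x) = 0) ->
   sumn (map elab (map f s)) = 0.
  by move=> T s0 f hf; elim: s0 => //= x s0 ->; rewrite hf.
by rewrite !z.
Qed.

Lemma cover_Dg : covr (edges Dg) (vset Dg) [:: 0].
Proof.
move=> v; rewrite /vset mem_undup /= mem_cat => hv; exists 0; first by rewrite inE.
have adjE x : x \in E -> adj E (esrc x).1 (edst x).1 by apply: adj_edge.
have cm : forall w, w \in nodes Tm 0 -> conn E w 0.
  apply: tree_conn => pc hpc; have := adjE (mkedge pc.1 (pc.2, false) 0).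
  by rewrite esrc_mk edst_mk; apply; rewrite /E !mem_cat (map_f _ hpc).
case/orP: hv => [/cm //|hv].
have cp : forall w, w \in nodes Tp o -> conn E w o.
  apply: tree_conn => pc hpc; have := adjE (mkedge (pc.2, false) pc.1 0).
  rewrite esrc_mk edst_mk adjC; apply; by rewrite /E !mem_cat (map_f _ hpc) orbT.
apply: conn_trans (cp _ hv) _; apply: conn1.
have := adjE (mkedge (o, false) (0, false) 1); rewrite esrc_mk edst_mk; apply.
by rewrite /E !mem_cat inE eqxx !orbT.
Qed.
End D0s.

Definition Inv n D := [/\ WF D, total_label D * 2 ^ size (merges D) <= 2 ^ (n - 1) &
  exists R, covr (edges D) (vset D) R /\ size R + size (loops D) + size (merges D) <= n].

Lemma Inv_step n D D' : Inv n D -> ruleI D D' -> Inv n D'.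
Proof.
move=> [wf tl [R [cv sz]]] [e [hmse ->]].
have [wf' tl' ml cv'] := step_main wf hmse.
have yle := y_le hmse.
split=> //.
- rewrite tl'; apply: leq_trans tl.
  have h1 : total_label D + elab e <= 2 * total_label D by rewrite total_lsum in yle *; lia.
  apply: leq_trans (leq_mul h1 (leqnn _)) _.
  rewrite -mulnA mulnCA -expnS leq_mul2l; apply/orP; right.
  by apply: leq_pexp2l.
- have [R' [cvR szR]] := cv' R cv; exists R'; split=> //; lia.
Qed.

Lemma Inv_D0 n Tm Tp (sigma : 'S_n) : 1 <= n -> leaves Tm = n -> leaves Tp = n ->
  Inv n (D0 Tm Tp sigma).
Proof.
move=> hn hTm hTp.
case: Tm hTm => [|a b] hTm; last case: Tp hTp => [|c d] hTp.
- rewrite /Inv /=; split; first by apply: Build_WF.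
    by rewrite /total_label /= mul1n expn_gt0.
  exists [::]; split=> //=; lia.
- rewrite /Inv /=; split; first by apply: Build_WF.
    by rewrite /total_label /= mul1n expn_gt0.
  exists [::]; split=> //=; lia.
- have slm : size (lports (Node a b) 0) = n by rewrite -hTm -(size_lports _ 0).
  have slp : size (lports (Node c d) (size_int (Node a b))) = n by rewrite -hTp -(size_lports _ (size_int (Node a b))).
  have W := WF_Dg sigma (Tm := Node a b) (Tp := Node c d) isT isT slm slp.
  have T := total_Dg (Node a b) (Node c d) sigma.
  have C := @cover_Dg n (Node a b) (Node c d) sigma.
  have hsz : size (nodes (Node c d) (size_int (Node a b))) = n - 1.
    by rewrite nodes_iota size_iota -hTp leavesE; lia.
  have T' : total_label (D0 (Node a b) (Node c d) sigma) = 1 := T.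
  have C' : covr (edges (D0 (Node a b) (Node c d) sigma)) (vset (D0 (Node a b) (Node c d) sigma)) [:: 0] := C.
  have W' : WF (D0 (Node a b) (Node c d) sigma) := W.
  have M' : merges (D0 (Node a b) (Node c d) sigma) = nodes (Node c d) (size_int (Node a b)) by [].
  have L' : loops (D0 (Node a b) (Node c d) sigma) = [::] by [].
  split=> //.
  + by rewrite T' M' hsz mul1n.
  + exists [:: 0]; split=> //.
    rewrite M' L' hsz /=; lia.
Qed.

Lemma Inv_reduces n D D' : reduces D D' -> Inv n D -> Inv n D'.
Proof. elim=> // D1 D2 D3 H _ IH h; apply: IH; exact: Inv_step h H. Qed.

Unset Implicit Arguments.
Theorem mainTheorem1 (n : nat) (Tm Tp : tree) (sigma : 'S_n)
  (Hn : 1 <= n) (HTm : leaves Tm = n) (HTp : leaves Tp = n)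
  (D : diagram) :
  reduces (D0 Tm Tp sigma) D -> reduced D ->
  ncomponents D <= n /\ total_label D <= 2 ^ (n - 1).
Proof.
move=> hr _.
have [wf tl [R [cv sz]]] := Inv_reduces hr (Inv_D0 sigma Hn HTm HTp).
split.
- rewrite /ncomponents; have := ncomp_le wf cv; lia.
- apply: leq_trans tl; rewrite -{1}(muln1 (total_label D)) leq_mul2l expn_gt0 orbT //.
Qed.
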